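(* Let $G$ be a finite solvable group having exactly one normal subgroup other than $1$ and $G$. Then $G$ is not $\psi$-normal divisible.
   Context: For a finite group $G$, $\psi(G)=\sum_{x\in G} o(x)$ denotes the sum of the orders of all elements of $G$. A finite group $G$ is called $\psi$-normal divisible if $\psi(H)$ divides $\psi(G)$ for every normal subgroup $H$ of $G$. *)

(* Defs.v *)
From mathcomp Require Import all_boot all_fingroup all_solvable.
Set Implicit Arguments. Unset Strict Implicit. Unset Printing Implicit Defensive.
Local Open Scope group_scope.

Definition psi (gT : finGroupType) (A : {set gT}) : nat := (\sum_(x in A) #[x])%N.

Definition psi_normal_divisible (gT : finGroupType) (G : {group gT}) : Prop :=
  forall H : {group gT}, H <| G -> (psi H %| psi G)%N.

(* Main.v *)
Require Import Defs.
From mathcomp Require Import all_boot all_fingroup all_solvable.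
Set Implicit Arguments. Unset Strict Implicit. Unset Printing Implicit Defensive.
Local Open Scope group_scope.
From mathcomp Require Import zify.
Section Arith.
Local Open Scope nat_scope.
Lemma cop_lin a b c : coprime a (b * a + c) = coprime a c.
Proof. by rewrite /coprime gcdnMDl. Qed.

Lemma arith1 p : prime p -> ~ (1 + (p-1)*p %| (1 + (p-1)*p) + (p*p - p)*(p*p)).
Proof.
move=> pr Hd; have p1 := prime_gt1 pr.
move: Hd; set s := 1 + (p-1)*p => Hd.
rewrite dvdn_addr // in Hd.
have E : (p*p - p)*(p*p) = (p-1) * p ^ 3 by rewrite expnS expnS expn1; nia.
rewrite E in Hd.
have c1 : coprime s (p-1) by rewrite coprime_sym /s addnC mulnC cop_lin coprimen1.
have c2 : coprime s p by rewrite coprime_sym /s addnC cop_lin coprimen1.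
have c3 : coprime s ((p-1) * p ^ 3) by rewrite coprimeMr c1 coprimeXr.
move: c3; rewrite /coprime (gcdn_idPl Hd) => /eqP s1.
have : (p-1)*p = 0 by rewrite /s in s1; lia.
by move/eqP; rewrite muln_eq0 subn_eq0 leqNgt p1 /= => /eqP p0; rewrite p0 in p1.
Qed.

Lemma arith2 p q k : prime p -> prime q -> 0 < k -> q %| p ^ k - 1 ->
  ~ (1 + (p^k-1)*p %| (1 + (p^k-1)*p) + (p^k*q - p^k)*q).
Proof.
move=> pr qr k0 qd Hd; have p1 := prime_gt1 pr; have q1 := prime_gt1 qr.
have n2 : p <= p ^ k by rewrite -{1}(expn1 p) leq_pexp2l // ltnW.
have cnp : forall s, coprime s p -> coprime s (p ^ k) by move=> s c; rewrite coprimeXr.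
move: qd Hd n2 cnp; set n := p ^ k => qd Hd n2 cnp.
move: Hd; set s := 1 + (n-1)*p => Hd.
rewrite dvdn_addr // in Hd.
have E : (n*q - n)*q = (n * q) * (q-1) by rewrite mulnBr muln1 mulnBl.
rewrite E in Hd.
have cp : coprime s p by rewrite coprime_sym /s addnC cop_lin coprimen1.
have cq : coprime s q.
  case/dvdnP: qd => c Ec.
  by rewrite coprime_sym /s Ec addnC mulnAC cop_lin coprimen1.
have cn : coprime s (n * q) by rewrite coprimeMr cq cnp.
rewrite Gauss_dvdr // in Hd.
have h1 : 0 < q - 1 by rewrite subn_gt0.
have h2 : 0 < n - 1 by rewrite subn_gt0 (leq_trans p1).
have := dvdn_leq h1 Hd; have := dvdn_leq h2 qd.
rewrite /s => a b.
have : (n-1)*1 <= (n-1)*p by rewrite leq_mul2l ltnW ?orbT.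
lia.
Qed.

End Arith.

Section S.
Set Default Proof Using "All".
Variables (gT : finGroupType) (G N : {group gT}).
Hypotheses (solG : solvable G) (nNG : N <| G) (ntN : N :!=: 1) (NneG : N :!=: G)
  (Hmax : forall M : {group gT}, M <| G -> [\/ M :=: 1, M :=: G | M :=: N]).

Lemma sNG : N \subset G. Proof. by case/andP: nNG. Qed.

Lemma minN : minnormal N G.
Proof.
apply/mingroupP; split; first by rewrite ntN normal_norm.
move=> H /andP[ntH nHG] sHN.
have : H <| G by rewrite /normal nHG (subset_trans sHN sNG).
case/Hmax=> HG //.
  by rewrite HG eqxx in ntH.
by case/negP: NneG; rewrite eqEsubset sNG -HG sHN.
Qed.

Lemma abN : exists2 p, prime p & p.-abelem N.
Proof.
have [_ _ ab] := minnormal_solvable minN sNG solG.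
exact/is_abelemP.
Qed.

Lemma primeGN : prime #|G : N|.
Proof.
rewrite -card_quotient ?normal_norm //.
apply: simple_sol_prime; first exact: quotient_sol.
rewrite quotient_simple //; apply/maxgroupP; split.
  rewrite normal_norm // andbT properEneq NneG sNG //.
move=> H /andP[pHG nHG] sNH.
have : H <| G by rewrite /normal nHG proper_sub.
case/Hmax=> // HG.
- by move: ntN; rewrite -subG1 -HG sNH.
- by rewrite HG properE subxx in pHG.
Qed.

Lemma centG : N \subset 'Z(G) -> abelian G.
Proof.
move=> sNZ; case/Hmax: (center_normal G) => ZG.
- by move: ntN; rewrite -subG1 -ZG sNZ.
- exact/center_idP.
- apply: cyclic_center_factor_abelian; apply: prime_cyclic.
  by rewrite ZG card_quotient ?normal_norm // primeGN.
Qed.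

Variable p : nat.
Hypotheses (pr_p : prime p) (abelN : p.-abelem N).

Lemma cycN y : y \in N -> y != 1 -> <[y]> <| G -> <[y]> = N.
Proof.
move=> Ny nty nyG; case/Hmax: nyG => E //.
- by case/negP: nty; rewrite -cycle_eq1 E.
- by case/negP: NneG; rewrite eqEsubset sNG -E cycle_subG.
Qed.

Lemma ab_cardN : abelian G -> #|N| = p.
Proof.
move=> abG; have [y Ny nty] := trivgPn _ ntN.
have Gy : y \in G by apply: (subsetP sNG).
rewrite -(cycN Ny nty) -?sub_abelian_normal ?cycle_subG //.
by rewrite -orderE (abelem_order_p abelN).
Qed.

Lemma ab_ord x : abelian G -> x \in G :\: N -> #[x] = #|G|.
Proof.
move=> abG /setDP[Gx nNx].
have : <[x]> <| G by rewrite -sub_abelian_normal ?cycle_subG.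
case/Hmax=> E.
- by case/negP: nNx; move/eqP: E; rewrite cycle_eq1 => /eqP->; rewrite group1.
- by rewrite orderE E.
- by case/negP: nNx; rewrite -E cycle_id.
Qed.

Lemma ab_q : abelian G -> #|G : N| = p.
Proof.
move=> abG; have q_pr := primeGN.
have [y Gy oy] : {y | y \in G & #[y] = #|G : N|}.
  by apply: Cauchy => //; rewrite -(Lagrange sNG) dvdn_mull.
have : <[y]> <| G by rewrite -sub_abelian_normal ?cycle_subG.
case/Hmax=> E.
- by move: q_pr; rewrite -oy orderE E cards1.
- move: oy; rewrite orderE E -(Lagrange sNG) (ab_cardN abG) => E2.
  have := prime_gt1 pr_p; have := prime_gt0 q_pr.
  move: E2; set a := #|G : N|; move=> E2 a0 p1.
  have : 1 * a < p * a by rewrite ltn_pmul2r.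
  by rewrite mul1n E2 ltnn.
- by rewrite -oy orderE E ab_cardN.
Qed.

Lemma pG_ab : #|G : N| = p -> abelian G.
Proof.
move=> qp.
have pG : p.-group G.
  rewrite /pgroup -(Lagrange sNG) pnatM qp pnat_id // andbT.
  exact: abelem_pgroup abelN.
have ntZ : 'Z(G) != 1.
  rewrite (center_nil_eq1 (pgroup_nil pG)); apply/negP => /eqP G1.
  by move: ntN; rewrite -subG1 -G1 sNG.
case/Hmax: (center_normal G) => ZG.
- by rewrite ZG eqxx in ntZ.
- exact/center_idP.
- by apply: centG; rewrite ZG.
Qed.

Hypothesis nabG : ~~ abelian G.

Lemma pq : p != #|G : N|.
Proof. by apply/negP=> /eqP E; case/negP: nabG; apply: pG_ab. Qed.

Lemma coprime_Nq : coprime #|N| #|G : N|.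
Proof.
rewrite (card_pgroup (abelem_pgroup abelN)) coprimeXl //.
by rewrite prime_coprime // dvdn_prime2 // ?primeGN // pq.
Qed.

Lemma Lfix y : y \in G -> #[y] = #|G : N| -> 'C_N(<[y]>) = 1.
Proof.
move=> Gy oy.
have NQ : N * <[y]> = G.
  apply/eqP; rewrite eqEcard mulG_subG sNG cycle_subG Gy /=.
  have := mul_cardG N <[y]>.
  rewrite coprime_TIg; last by rewrite -orderE oy coprime_Nq.
  by rewrite cards1 muln1 -orderE oy (Lagrange sNG) => ->.
have nCG : 'C_N(<[y]>) <| G.
  rewrite /normal (subset_trans (subsetIl _ _) sNG) /= -NQ mulG_subG.
  rewrite sub_abelian_norm ?subsetIl ?(abelem_abelian abelN) //=.
  rewrite normsI // ?norms_cent ?normG //.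
  by rewrite (subset_trans _ (normal_norm nNG)) ?cycle_subG.
case/Hmax: nCG => E //.
- by case/negP: NneG; rewrite eqEsubset sNG -E subsetIl.
- case/negP: nabG; apply: centG.
  rewrite subsetI sNG centsC -{1}NQ mulG_subG /=.
  apply/andP; split; first exact: abelem_abelian abelN.
  by rewrite centsC; have := subsetIr N 'C(<[y]>); rewrite E.
Qed.

Lemma ordq x : x \in G :\: N -> #[x] = #|G : N|.
Proof.
move=> /setDP[Gx nNx]; set q := #|G : N|.
have q_pr : prime q := primeGN.
have nNx' : x \in 'N(N) := subsetP (normal_norm nNG) x Gx.
have Nz : x ^+ q \in N.
  apply: coset_idr; first by rewrite groupX.
  rewrite morphX //= /q -card_quotient ?normal_norm //.
  by rewrite expg_cardG // mem_quotient.
have zp : (x ^+ q) ^+ p = 1.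
  case: (eqVneq (x ^+ q) 1) => [->|ntz]; first by rewrite expg1n.
  by apply/eqP; rewrite -order_dvdn (abelem_order_p abelN).
have ntx : x != 1 by apply: contraNneq nNx => ->; rewrite group1.
case: (eqVneq (x ^+ q) 1) => [z1|ntz].
  apply/eqP; move/eqP: z1; rewrite -order_dvdn => /(prime_nt_dvdP q_pr).
  by rewrite order_eq1 => /(_ ntx) ->.
exfalso.
have ntxp : x ^+ p != 1.
  apply/negP=> /eqP xp; case/negP: nNx.
  have dxp : #[x] %| p by rewrite order_dvdn xp.
  have cxq : coprime #[x] q.
    apply: (coprime_dvdl dxp); rewrite prime_coprime // dvdn_prime2 //; exact: pq.
  have : generator <[x]> (x ^+ q) by rewrite generator_coprime.
  rewrite /generator => /eqP E.
  by rewrite (subsetP _ x (cycle_id x)) // E cycle_subG.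
have oy : #[x ^+ p] = q.
  apply/(prime_nt_dvdP q_pr); first by rewrite order_eq1.
  by rewrite order_dvdn -expgM mulnC expgM zp.
have := Lfix (groupX p Gx) oy.
move/setP/(_ (x ^+ q)); rewrite !inE Nz cent_cycle /= (negPf ntz).
by move/negbT/negP; apply; apply/cent1P; apply: commuteX2.
Qed.

Lemma qdiv : #|G : N| %| #|N| - 1.
Proof.
have q_pr := primeGN.
have [y Gy oy] : {y | y \in G & #[y] = #|G : N|}.
  by apply: Cauchy => //; rewrite -(Lagrange sNG) dvdn_mull.
have H := pgroup_fix_mod (to := 'J%act) (p := #|G : N|) (G := <[y]>) (S := N).
rewrite -eqn_mod_dvd ?cardG_gt0 //.
have E : 'Fix_(N | 'J)(<[y]>) = 1.
  by rewrite -(Lfix Gy oy) afixJ.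
rewrite E cards1 in H; apply/eqP; apply: H.
  by rewrite /pgroup -orderE oy pnat_id.
by rewrite astabsJ (subset_trans _ (normal_norm nNG)) ?cycle_subG.
Qed.
End S.

Lemma psi_abelem (gT : finGroupType) (N : {group gT}) p :
  p.-abelem N -> psi N = 1 + (#|N| - 1) * p.
Proof.
move=> abN; rewrite /psi (big_setD1 1) //= order1; congr (1 + _).
rewrite (eq_bigr (fun _ => p)); last first.
  by move=> x /setD1P[ntx Nx]; apply: (abelem_order_p abN).
by rewrite sum_nat_const (cardsD1 1 N) group1 add1n subSS subn0.
Qed.

Lemma psi_split (gT : finGroupType) (G N : {group gT}) m :
  N \subset G -> (forall x, x \in G :\: N -> #[x] = m) ->
  psi G = psi N + (#|G| - #|N|) * m.
Proof.
move=> sNG om; rewrite /psi (big_setID N) (setIidPr sNG) /=; congr (_ + _).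
rewrite (eq_bigr (fun _ => m)) // sum_nat_const cardsD (setIidPr sNG) //.
Qed.

Theorem proposition3p2 (gT : finGroupType) (G : {group gT}) :
  solvable G ->
  (exists N : {group gT},
      [/\ N <| G, N :!=: 1, N :!=: G &
          forall M : {group gT}, M <| G -> [\/ M :=: 1, M :=: G | M :=: N]]) ->
  ~ psi_normal_divisible G.
Proof.
move=> solG [N [nNG ntN NneG Hmax]] Hdiv.
have Hd := Hdiv N nNG.
have [p pr abN] := abN solG nNG ntN NneG Hmax.
have sNG := sNG solG nNG ntN NneG Hmax.
have LG := Lagrange sNG.
case: (boolP (abelian G)) => abG.
  have cN := ab_cardN solG nNG ntN NneG Hmax pr abN abG.
  have qG := ab_q solG nNG ntN NneG Hmax pr abN abG.
  rewrite (psi_split sNG (fun x => ab_ord (x:=x) solG nNG ntN NneG Hmax pr abN abG)) in Hd.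
  rewrite (psi_abelem abN) -LG cN qG in Hd.
  exact: arith1 pr Hd.
have qd := qdiv solG nNG ntN NneG Hmax pr abN abG.
rewrite (psi_split sNG (ordq solG nNG ntN NneG Hmax pr abN abG)) in Hd.
rewrite (psi_abelem abN) -LG in Hd.
have cN := card_pgroup (abelem_pgroup abN).
have k0 : 0 < logn p #|N|.
  have pN : (p %| #|N|)%N.
    by case: (trivgPn _ ntN) => y Ny nty; rewrite -(abelem_order_p abN Ny nty) order_dvdG.
  by rewrite lognE pr cardG_gt0 pN.
rewrite cN in Hd qd.
exact: arith2 pr (primeGN solG nNG ntN NneG Hmax) k0 qd Hd.
Qed.
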